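(* Let $\Delta\geq 3$ be an integer. If $T$ is a rooted $(\Delta-1)$-ary tree of order $n$, then $$\sum_{u\in V(T)}n^{\downarrow}(u)\geq \frac{\Delta-2}{(\Delta-1)^2}\,n\left(\log_{(\Delta-1)}\big((\Delta-2)n\big)-1\right).$$
   Context: A rooted tree is $(\Delta-1)$-ary if every vertex has at most $\Delta-1$ children. For a vertex $u$ of a rooted tree $T$, $n^{\downarrow}(u)$ denotes the number of vertices of $T$ that are equal to $u$ or are descendants of $u$. *)

(* Defs.v *)
From Stdlib Require Import Reals List Arith.
Import ListNotations.

(* A rooted tree (children ordered; the quantities below do not depend on
   the order of children). Every such tree has at least one vertex. *)
Inductive rtree : Type := Node : list rtree -> rtree.

Fixpoint order (t : rtree) : nat :=
  match t with
  | Node ts =>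
      S ((fix go (l : list rtree) : nat :=
            match l with [] => 0 | c :: l' => order c + go l' end) ts)
  end.

(* sum over all vertices u of n_down(u), the size of the subtree rooted at u *)
Fixpoint sum_ndown (t : rtree) : nat :=
  match t with
  | Node ts =>
      order (Node ts) +
      (fix go (l : list rtree) : nat :=
         match l with [] => 0 | c :: l' => sum_ndown c + go l' end) ts
  end.

Fixpoint kary (k : nat) (t : rtree) : Prop :=
  match t with
  | Node ts =>
      length ts <= k /\
      (fix go (l : list rtree) : Prop :=
         match l with [] => True | c :: l' => kary k c /\ go l' end) ts
  end.

Definition logb (b x : R) : R := ln x / ln b.

(* Main.v *)
Require Import Defs.
From Stdlib Require Import Reals.
From Stdlib Require Import Lia Lra Psatz List Arith.
Import ListNotations.
Open Scope R_scope.

Fixpoint sumo (l : list rtree) : nat :=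
  match l with [] => 0 | c :: l' => order c + sumo l' end.
Fixpoint sums (l : list rtree) : nat :=
  match l with [] => 0 | c :: l' => sum_ndown c + sums l' end.
Fixpoint allk (k : nat) (l : list rtree) : Prop :=
  match l with [] => True | c :: l' => kary k c /\ allk k l' end.

Lemma order_node ts : order (Node ts) = S (sumo ts).
Proof. reflexivity. Qed.
Lemma sum_node ts : sum_ndown (Node ts) = (order (Node ts) + sums ts)%nat.
Proof. reflexivity. Qed.
Lemma kary_node k ts : kary k (Node ts) -> (length ts <= k /\ allk k ts)%nat.
Proof.
  simpl. intros [H1 H2]. split; [exact H1|]. clear H1.
  induction ts as [|c ts IH]; simpl in *. exact I. destruct H2. split; auto.
Qed.

Definition rtree_ind' (P : rtree -> Prop) (Q : list rtree -> Prop)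
  (Hnil : Q []) (Hcons : forall c l, P c -> Q l -> Q (c :: l))
  (Hnode : forall l, Q l -> P (Node l)) : forall t, P t :=
  fix f t := match t with Node l => Hnode l
    ((fix g l := match l return Q l with [] => Hnil | c :: l' => Hcons c l' (f c) (g l') end) l) end.

Fixpoint L (k H : nat) : nat :=
  match H with 0 => 0 | S H' => H' + k * L k H' end.

Lemma tree_bound k : forall t, kary k t -> forall H,
  (H * order t <= sum_ndown t + L k H)%nat.
Proof.
  apply (rtree_ind' (fun t => kary k t -> forall H, (H * order t <= sum_ndown t + L k H)%nat)
     (fun l => allk k l -> forall H, (H * sumo l <= sums l + length l * L k H)%nat)).
  - simpl; intros; lia.
  - intros c l IHc IHl [Hc Hl] H. simpl.
    specialize (IHc Hc H). specialize (IHl Hl H). nia.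
  - intros l IHl Hk H. apply kary_node in Hk. destruct Hk as [Hlen Hl].
    rewrite sum_node, order_node. destruct H as [|H]. lia.
    specialize (IHl Hl H). simpl L.
    assert (length l * L k H <= k * L k H)%nat by nia. nia.
Qed.

Lemma L_id j : forall H, (L (S j) H * (j * j) + H * j + 1 = (S j) ^ H)%nat.
Proof.
  induction H as [|H IH]. simpl; lia.
  simpl L. rewrite Nat.pow_succ_r'. rewrite <- IH. nia.
Qed.

Lemma sum_ge_order t : (order t <= sum_ndown t)%nat.
Proof. destruct t. rewrite sum_node. lia. Qed.

Lemma find_m k : (2 <= k)%nat -> forall z, exists m,
  (z < k ^ (m+1))%nat /\ (m = 0 \/ k ^ m <= z)%nat.
Proof.
  intros Hk. induction z as [|z [m [H1 H2]]].
  - exists 0%nat. simpl. lia.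
  - destruct (Nat.eq_dec (S z) (k ^ (m+1))) as [E|E].
    + exists (m+1)%nat. split; [|lia].
      replace (m+1+1)%nat with (S (m+1)) by lia. rewrite Nat.pow_succ_r'. nia.
    + exists m. lia.
Qed.

Theorem lemma3 (D : nat) (T : rtree) :
  (3 <= D)%nat -> kary (D - 1) T ->
  INR (sum_ndown T) >=
    INR (D - 2) / (INR (D - 1)) ^ 2 * INR (order T) *
    (logb (INR (D - 1)) (INR (D - 2) * INR (order T)) - 1).
Proof.
  intros HD HT.
  set (k := (D - 1)%nat) in *.
  assert (Hk2 : (D - 2 = k - 1)%nat) by (unfold k; lia).
  rewrite Hk2.
  set (n := order T). set (s := sum_ndown T).
  assert (Hn : (1 <= n)%nat) by (unfold n; destruct T; rewrite order_node; lia).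
  assert (Hk : (2 <= k)%nat) by (unfold k; lia).
  destruct (find_m k Hk ((k-1)*n)) as [m [Hm1 Hm2]].
  assert (Rk : 1 < INR k) by (apply (lt_INR 1); lia).
  assert (lnk : 0 < ln (INR k)) by (rewrite <- ln_1; apply ln_increasing; lra).
  assert (Hbr : logb (INR k) (INR (k - 1) * INR n) - 1 <= INR m).
  { unfold logb. rewrite <- mult_INR.
    assert (ln (INR ((k-1)*n)) < INR (m+1) * ln (INR k)).
    { rewrite <- ln_pow by lra. apply ln_increasing.
      apply (lt_INR 0); nia. rewrite <- pow_INR. apply lt_INR. exact Hm1. }
    rewrite plus_INR in H. simpl in H.
    apply Rmult_lt_compat_r with (r := / ln (INR k)) in H; [|apply Rinv_0_lt_compat; lra].
    replace ((INR m + 1) * ln (INR k) * / ln (INR k)) with (INR m + 1) in H by (field; lra).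
    unfold Rdiv. lra. }
  assert (Hc : 0 <= INR (k - 1) / INR k ^ 2 * INR n).
  { apply Rmult_le_pos; [|apply pos_INR]. unfold Rdiv; apply Rmult_le_pos; [apply pos_INR|]; apply Rlt_le, Rinv_0_lt_compat.
    apply pow_lt; lra. }
  apply Rle_ge. eapply Rle_trans.
  { apply Rmult_le_compat_l; [exact Hc| exact Hbr]. }
  assert (Hnat : ((k-1)*n*m <= k*k*s)%nat).
  { destruct m as [|[|m]].
    - lia.
    - pose proof (sum_ge_order T). fold n s in H. nia.
    - set (M := S (S m)) in *.
      destruct Hm2 as [Hm2|Hm2]; [unfold M in Hm2; lia|].
      pose proof (tree_bound k T HT M) as A. fold n s in A.
      destruct k as [|j]; [lia|].
      pose proof (L_id j M) as Id.
      replace (S j - 1)%nat with j in * by lia.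
      assert (B : (j * L (S j) M <= n)%nat) by nia.
      assert (HM : (2 <= M)%nat) by (unfold M; lia).
      assert (C : ((S j * S j) * L (S j) M <= M * n * (j*j+j+1))%nat).
      { assert (2 * n * (j*j+j+1) <= M * n * (j*j+j+1))%nat by nia.
        assert (S j * S j * L (S j) M <= 2 * (j * L (S j) M) * (j*j+j+1))%nat by nia.
        nia. }
      nia. }
  apply le_INR in Hnat. rewrite !mult_INR in Hnat.
  assert (0 < INR k) by lra.
  apply (Rmult_le_reg_l (INR k ^ 2)). apply pow_lt; lra.
  replace (INR k ^ 2 * (INR (k - 1) / INR k ^ 2 * INR n * INR m)) with
    (INR (k - 1) * INR n * INR m) by (field; lra).
  simpl. lra.
Qed.
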